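(* Let $k, r, a, b, m, n$ be integers satisfying $$k\geq 1,\quad 0\leq a\leq m,\quad \max\{0,\tfrac{a}{k}-r\}\leq b\leq n,\quad n\geq \tfrac{m}{k}-r.$$ Let $L_{\frac1k,r}(a,b;m,n)$ be the set of lattice paths from $(a,b)$ to $(m,n)$ with unit steps $(1,0)$ and $(0,1)$ that stay weakly above the line $y=\frac{x}{k}-r$. Then $$|L_{\frac1k,r}(a,b;m,n)|=\sum_{i=0}^{\lfloor\frac{k(n+r)-m}{k+1}\rfloor}(-1)^i\,\frac{k(b+r)-a+1}{k(n+r-i)-a+1}\binom{(k+1)(n-i)-a-b+kr}{n-b-i}\binom{k(n+r-i)-m}{i}.$$
   Context: A path stays weakly above the line $y=\frac{x}{k}-r$ if every lattice point $(x,y)$ on it satisfies $y\geq \frac{x}{k}-r$. $\lfloor x\rfloor$ is the floor function. Binomial coefficients $\binom{N}{j}$ with $N\ge0$ equal $0$ when $j<0$ or $j>N$. *)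

(* Defs.v *)
From HB Require Import structures.
From mathcomp Require Import all_boot all_order all_algebra.
Set Implicit Arguments. Unset Strict Implicit. Unset Printing Implicit Defensive.
Import Order.TTheory GRing.Theory Num.Theory.
Local Open Scope ring_scope.

Definition point := (int * int)%type.

Definition step (p : point) (s : bool) : point :=
  if s then (p.1 + 1, p.2) else (p.1, p.2 + 1).

Definition path_points (p0 : point) (s : seq bool) : seq point :=
  p0 :: scanl step p0 s.

Definition path_end (p0 : point) (s : seq bool) : point := foldl step p0 s.

Definition weakly_above (k r : int) (p : point) : bool :=
  (p.1%:~R / k%:~R - r%:~R <= (p.2%:~R : rat)).

(* Any such path has exactly
   (m-a)+(n-b) steps, so paths are encoded as step tuples of that length. *)
Definition path_len (a b m n : int) : nat := absz ((m - a) + (n - b)).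

Definition Lpaths (k r a b m n : int) : {set (path_len a b m n).-tuple bool} :=
  [set t : (path_len a b m n).-tuple bool |
     (path_end (a, b) t == (m, n)) &&
     all (weakly_above k r) (path_points (a, b) t)].

(* Binomial coefficient with integer arguments: 'C(N, j) for N >= 0, j >= 0,
   and 0 when j < 0 (or N < 0, which never occurs in the statement). *)
Definition zbinom (N j : int) : int :=
  if (0 <= N) && (0 <= j) then ('C(absz N, absz j))%:Z else 0.

(* Main.v *)
Require Import Defs.
From HB Require Import structures.
From mathcomp Require Import all_boot all_order all_algebra.
From mathcomp Require Import zify ring lra.
Import Order.TTheory GRing.Theory Num.Theory.
Local Open Scope ring_scope.

Lemma zb_negj N j : j < 0 -> zbinom N j = 0.
Proof. by rewrite /zbinom => h; case: ifP => // /andP[_ h2]; lia. Qed.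

Lemma zb_negN N j : N < 0 -> zbinom N j = 0.
Proof. by rewrite /zbinom => h; case: ifP => // /andP[h2 _]; lia. Qed.

Lemma zb_small N j : N < j -> zbinom N j = 0.
Proof.
rewrite /zbinom => h; case: ifP => // /andP[h1 h2].
rewrite bin_small //; lia.
Qed.

Lemma zb0 N : 0 <= N -> zbinom N 0 = 1.
Proof. by rewrite /zbinom => ->; rewrite bin0. Qed.

Lemma zb_nz N j : zbinom N j != 0 -> (0 <= j) && (j <= N).
Proof.
move=> h; apply/andP; split.
  by rewrite leNgt; apply/negP => /(zb_negj N) e; rewrite e eqxx in h.
by rewrite leNgt; apply/negP => /zb_small e; rewrite e eqxx in h.
Qed.

Lemma zb_pascal M j : (M != 0) || (j != 0) ->
  zbinom M j = zbinom (M - 1) j + zbinom (M - 1) (j - 1).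
Proof.
move=> h.
have [hM|hM] := ltP M 0.
  by rewrite !zb_negN //; lia.
have [hj|hj] := ltP j 0.
  by rewrite !zb_negj //; lia.
case: M hM h => // M _; case: j hj => // j _.
case: M => [|M] h.
  rewrite (@zb_negN (0 - 1)) // (@zb_negN (0-1)) //.
  case: j h => // j _; rewrite /zbinom /=; by [].
case: j h => [|j] _.
  have -> : (Posz M.+1 - 1) = Posz M by lia.
  by rewrite (@zb_negj _ (Posz 0 - 1)) // /zbinom /= !bin0.
have -> : (Posz M.+1 - 1) = Posz M by lia.
have -> : (Posz j.+1 - 1) = Posz j by lia.
by rewrite /zbinom /= binS PoszD.
Qed.

Definition Bf (k E N : int) : int := zbinom (E + N) N - k * zbinom (E + N) (N - 1).

Lemma Bf_neg k E N : N < 0 -> Bf k E N = 0.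
Proof. by move=> h; rewrite /Bf !zb_negj ?mulr0 ?subr0 //; lia. Qed.

Lemma Bf_pascal k E N : ~~ ((E == 0) && (N == 0)) -> ~~ ((E == -1) && (N == 1)) ->
  Bf k E N = Bf k (E - 1) N + Bf k E (N - 1).
Proof.
move=> h1 h2; rewrite /Bf.
rewrite (zb_pascal (E + N) N); last by apply/orP; lia.
rewrite (zb_pascal (E + N) (N - 1)); last by apply/orP; lia.
have -> : E - 1 + N = E + N - 1 by ring.
have -> : E + (N - 1) = E + N - 1 by ring.
ring.
Qed.

Lemma Bf_line k N : 0 <= k -> Bf k (k * N - 1) N = 0.
Proof.
move=> hk.
have [hN|hN] := ltP N 0; first exact: Bf_neg.
case: N hN => // N _.
case: N => [|j].
  rewrite /Bf !zb_negN ?mulr0 ?subr0 //; lia.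
case: k hk => // k _.
rewrite /Bf.
have -> : Posz k * Posz j.+1 - 1 + Posz j.+1 = Posz (k * j.+1 + j)%N by lia.
have -> : Posz j.+1 - 1 = Posz j by lia.
rewrite /zbinom /=.
apply/eqP; rewrite subr_eq0 -PoszM; apply/eqP; congr Posz.
apply/eqP; rewrite -(eqn_pmul2l (ltn0Sn j)) mul_bin_left.
apply/eqP; have -> : (k * j.+1 + j - j = k * j.+1)%N by lia.
ring.
Qed.

Lemma Bf_ratio k E N : 0 <= E ->
  (E + 1) * Bf k E N = (E - k * N + 1) * zbinom (E + N) N.
Proof.
move=> hE.
suff h : (E + 1) * zbinom (E + N) (N - 1) = N * zbinom (E + N) N.
  rewrite /Bf mulrBr mulrCA h; ring.
have [hN|hN] := ltP N 0.
  by rewrite !zb_negj ?mulr0 //; lia.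
case: N hN => // N _; case: N => [|j].
  by rewrite zb_negj ?mulr0 ?mul0r //.
case: E hE => // e _.
have -> : Posz e + Posz j.+1 = Posz (e + j.+1)%N by [].
have -> : Posz j.+1 - 1 = Posz j by lia.
rewrite /zbinom /= -!PoszM; congr Posz.
rewrite mul_bin_left.
have -> : (e + j.+1 - j = e + 1)%N by lia.
by rewrite addn1.
Qed.

Definition T (k p e X : int) (i : nat) : int :=
  (-1) ^+ i * Bf k (X - k * i%:Z + p) (e - i%:Z) * zbinom (X - k * i%:Z) i%:Z.

Definition W (k : int) (S : nat) (p e X : int) : int :=
  \sum_(0 <= i < S) T k p e X i.

Lemma W_pascal (k : int) (S : nat) (p e X : int) : 0 <= p -> (p != 0) || (e != 0) ->
  W k S p e X = W k S (p - 1) e X + W k S p (e - 1) X.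
Proof.
move=> hp hpe; rewrite /W -big_split; apply: eq_bigr => i _ /=; rewrite /T.
have [h|h] := eqVneq (zbinom (X - k * i%:Z) i%:Z) 0.
  by rewrite h !mulr0 addr0.
move: (zb_nz _ _ h) => /andP[h1 h2].
rewrite (Bf_pascal k); last first.
- by apply/negP => /andP[/eqP e1 /eqP e2]; lia.
- by apply/negP => /andP[/eqP e1 /eqP e2]; lia.
have -> : X - k * i%:Z + (p - 1) = X - k * i%:Z + p - 1 by ring.
have -> : e - 1 - i%:Z = e - i%:Z - 1 by ring.
ring.
Qed.

Lemma W_zero_e (k : int) (S : nat) (p e X : int) : e < 0 -> W k S p e X = 0.
Proof.
move=> he; rewrite /W big1 // => i _; rewrite /T Bf_neg ?mulr0 ?mul0r //; lia.
Qed.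

Lemma W_e0 (k : int) (S : nat) (p X : int) : (0 < S)%N -> 0 <= X -> 0 <= p -> W k S p 0 X = 1.
Proof.
move=> hS hX hp; rewrite /W; case: S hS => // S _.
rewrite big_nat_recl // big1 ?addr0; last first.
  by move=> i _; rewrite /T Bf_neg ?mulr0 ?mul0r //; lia.
rewrite /T /Bf expr0 mul1r !mulr0 !subr0 ?addr0 (@zb_negj _ (0 - 1)) // mulr0 subr0.
by rewrite !zb0 //; lia.
Qed.

Lemma W_line (k : int) (S : nat) (p e X : int) : 0 <= k -> X + p = k * e - 1 -> W k S p e X = 0.
Proof.
move=> hk h; rewrite /W big1 // => i _; rewrite /T.
have -> : X - k * i%:Z + p = k * (e - i%:Z) - 1.
  by rewrite mulrBr; lia.
by rewrite Bf_line // mulr0 mul0r.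
Qed.

Lemma W_cpascal (k : int) (S : nat) (e X : int) : X != 0 ->
  W k S.+1 (-1) e X = W k S.+1 0 e (X - 1) - W k S 0 (e - 1) (X - 1 - k).
Proof.
move=> hX.
have step : forall i, T k (-1) e X i = T k 0 e (X - 1) i +
   (-1) ^+ i * Bf k (X - k * i%:Z - 1) (e - i%:Z) * zbinom (X - k * i%:Z - 1) (i%:Z - 1).
  move=> i; rewrite /T (zb_pascal (X - k * i%:Z)); last by apply/orP; lia.
  have -> : X - 1 - k * i%:Z = X - k * i%:Z - 1 by ring.
  rewrite addr0; ring.
rewrite /W (eq_bigr _ (fun i _ => step i)) big_split /=; congr (_ + _).
rewrite big_nat_recl // /= (@zb_negj _ (0 - 1)) // mulr0 add0r -sumrN.
apply: eq_bigr => i _; rewrite /T.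
have -> : X - k * i.+1%:Z - 1 = X - 1 - k - k * i%:Z + 0.
  by rewrite -addn1 PoszD; ring.
have -> : e - i.+1%:Z = e - 1 - i%:Z by rewrite -addn1 PoszD; ring.
have -> : i.+1%:Z - 1 = i%:Z by rewrite -addn1 PoszD; ring.
rewrite addr0 exprS; ring.
Qed.

Lemma W_V (k : int) : 1 <= k -> forall (e : nat) (X : int) (S : nat),
  k * e%:Z <= X -> (e < S)%N -> W k S 0 e%:Z X = 1.
Proof.
move=> hk; elim=> [|e IH] X S hX hS.
  by apply: W_e0 => //; rewrite mulr0 in hX.
have split1 : forall S' Y, (e.+1 < S')%N -> k * e.+1%:Z <= Y ->
    W k S' 0 e.+1%:Z Y = W k S' (-1) e.+1%:Z Y + 1.
  move=> S' Y h1 h2.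
  rewrite W_pascal //.
  rewrite sub0r; congr (_ + _).
  have -> : e.+1%:Z - 1 = e%:Z by rewrite -addn1 PoszD; ring.
  apply: IH; last by lia.
  have : k * e%:Z <= k * e.+1%:Z by rewrite ler_pM2l ?ltz_nat; lia.
  lia.
suff H : forall d : nat, forall S', (e.+1 < S')%N ->
    W k S' 0 e.+1%:Z (k * e.+1%:Z + d%:Z) = 1.
  have -> : X = k * e.+1%:Z + Posz (absz (X - k * Posz e.+1)%R).
    by rewrite gez0_abs; lia.
  exact: H.
elim=> [|d IHd] S' hS'.
  rewrite split1 //; last by lia.
  by rewrite W_line //; lia.
rewrite split1 //; last by lia.
case: S' hS' => // S'' hS''.
rewrite W_cpascal; last by lia.
have -> : k * e.+1%:Z + d.+1%:Z - 1 = k * e.+1%:Z + d%:Z by rewrite -addn1 PoszD; ring.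
rewrite IHd //.
have -> : e.+1%:Z - 1 = e%:Z by rewrite -addn1 PoszD; ring.
rewrite IH //.
have -> : k * e.+1%:Z = k * e%:Z + k by rewrite -addn1 PoszD; ring.
lia.
Qed.

Lemma W_Z (k : int) (e : nat) (X : int) (S : nat) : 1 <= k -> (0 < e)%N ->
  k * e%:Z <= X -> (e < S)%N -> W k S (-1) e%:Z X = 0.
Proof.
move=> hk he hX hS.
case: e he hX hS => // e _ hX hS.
have h := W_pascal k S 0 e.+1%:Z X (lexx 0) isT.
move: h; rewrite sub0r W_V //.
have -> : e.+1%:Z - 1 = e%:Z by rewrite -addn1 PoszD; ring.
rewrite W_V //.
- by move=> /(congr1 (fun z => z - 1)); rewrite addrK subrr => <-.
- have : k * e%:Z <= k * e.+1%:Z by rewrite ler_pM2l ?ltz_nat; lia.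
  lia.
- exact: ltn_trans (ltnSn e) hS.
Qed.

Fixpoint cnt (k r : int) (q : point) (L : nat) (p0 : point) : nat :=
  match L with
  | 0 => ((p0 == q) && weakly_above k r p0 : nat)
  | L'.+1 => if weakly_above k r p0
             then (cnt k r q L' (step p0 true) + cnt k r q L' (step p0 false))%N
             else 0%N
  end.

Lemma sum_tupleS (L : nat) (F : L.+1.-tuple bool -> nat) :
  (\sum_(t : L.+1.-tuple bool) F t =
   \sum_(t : L.-tuple bool) F [tuple of true :: t] +
   \sum_(t : L.-tuple bool) F [tuple of false :: t])%N.
Proof.
rewrite (reindex (fun p : bool * L.-tuple bool => [tuple of p.1 :: p.2])) /=; last first.
  exists (fun t : L.+1.-tuple bool => (thead t, [tuple of behead t])).
    by move=> [x t] _ /=; congr pair; apply: val_inj.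
  by move=> t _; rewrite [in RHS](tuple_eta t).
rewrite -(pair_bigA _ (fun (x : bool) (t : L.-tuple bool) => F [tuple of x :: t])) /=.
by rewrite big_bool /= addnC.
Qed.

Lemma cnt_sum (k r : int) (q : point) (L : nat) (p0 : point) :
  (\sum_(t : L.-tuple bool)
     ((path_end p0 t == q) && all (weakly_above k r) (path_points p0 t) : nat))%N
  = cnt k r q L p0.
Proof.
elim: L p0 => [|L IH] p0.
  rewrite (big_pred1 [tuple]) /=; last by move=> t; symmetry; apply/eqP; apply: tuple0.
  by rewrite /path_end /path_points /= andbT.
rewrite sum_tupleS /=.
rewrite /path_end /path_points /=.
case: (weakly_above k r p0) => /=.
  by rewrite -!IH.
by rewrite !big1 // => t _; rewrite andbF.
Qed.

Lemma wa_iff (k r x y : int) : 0 < k ->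
  weakly_above k r (x, y) = (x <= k * (y + r)).
Proof.
move=> hk; rewrite /weakly_above /= lerBlDr ler_pdivrMr ?ltr0z //.
by rewrite -intrD -intrM ler_int mulrC.
Qed.

Lemma cnt_notabove k r q L p0 : ~~ weakly_above k r p0 -> cnt k r q L p0 = 0%N.
Proof. by case: L => [|L] /= h; rewrite (negbTE h) ?andbF. Qed.

Lemma cnt_beyond k r (q : point) L (p0 : point) :
  (q.1 < p0.1) || (q.2 < p0.2) -> cnt k r q L p0 = 0%N.
Proof.
case: q => qx qy.
elim: L p0 => [|L IH] [x y] /= h.
  case: eqP => [[ex ey]|] //=; subst; lia.
case: ifP => // _; rewrite !IH //= ; lia.
Qed.

Lemma PoszS1 (j : nat) : j.+1%:Z - 1 = j%:Z.
Proof. by rewrite -addn1 PoszD addrK. Qed.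

Lemma main_cnt (k r m n X : int) : 1 <= k -> X = k * (n + r) - m -> 0 <= X ->
  forall (L p e : nat), L = (p + e)%N -> k * e%:Z <= X + p%:Z ->
  forall S, (e < S)%N ->
  (cnt k r (m, n) L (m - p%:Z, n - e%:Z))%:Z = W k S p%:Z e%:Z X.
Proof.
move=> hk hXd hX.
have hk0 : 0 < k by lia.
have hk00 : 0 <= k by lia.
elim=> [|L IH] p e hL hab S hS.
  case: p hL hab => // ; case: e hS => // hS _ _.
  rewrite /= !subr0 eqxx /= wa_iff // W_e0 //; last by lia.
have hwa : weakly_above k r (m - p%:Z, n - e%:Z).
  rewrite wa_iff //.
  have -> : k * (n - e%:Z + r) = k * (n + r) - k * e%:Z by ring.
  lia.
rewrite /= hwa PoszD W_pascal //; last first.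
  by case: p hL {hab hwa} => [|p] //=; case: e {hS} => [|e].
rewrite /step /=; congr (_ + _).
- case: p hL hab hwa => [|p] hL hab hwa.
    rewrite cnt_beyond /=; last by apply/orP; left; lia.
    rewrite sub0r W_Z //; last by lia.
    by case: e hL {hab hwa hS}.
  rewrite PoszS1.
  have [h|h] := leP (k * e%:Z) (X + p%:Z).
    have -> : m - p.+1%:Z + 1 = m - p%:Z by rewrite -PoszS1; ring.
    by apply: IH => //; lia.
  rewrite W_line //; last first.
    by move: hab; rewrite -addn1 PoszD; lia.
  rewrite cnt_notabove //.
  rewrite wa_iff //.
  have -> : k * (n - e%:Z + r) = k * (n + r) - k * e%:Z by ring.
  rewrite -addn1 PoszD; lia.
- case: e hL hab hwa hS => [|e] hL hab hwa hS.
    rewrite cnt_beyond /=; last by apply/orP; right; lia.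
    by rewrite W_zero_e.
  rewrite PoszS1.
  have -> : n - e.+1%:Z + 1 = n - e%:Z by rewrite -PoszS1; ring.
  apply: IH => //.
  + by move: hL; rewrite addnS => -[].
  + have : k * e%:Z <= k * e.+1%:Z by rewrite ler_pM2l ?ltz_nat; lia.
    lia.
  + exact: ltn_trans (ltnSn e) hS.
Qed.

Lemma W_ext (k : int) (S S' : nat) (p e X : int) : (S' <= S)%N ->
  (forall i, (S' <= i)%N -> T k p e X i = 0) -> W k S p e X = W k S' p e X.
Proof.
move=> hS h; rewrite /W (@big_cat_nat _ _ _ S' 0 S) //=.
rewrite [Y in _ + Y]big_nat_cond [Y in _ + Y]big1 ?addr0 // => i /andP[/andP[hi _] _]; exact: h.
Qed.

Lemma card_cnt (k r : int) (q : point) (L : nat) (p0 : point) :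
  #|[set t : L.-tuple bool |
     (path_end p0 t == q) && all (weakly_above k r) (path_points p0 t)]|
  = cnt k r q L p0.
Proof.
rewrite -cnt_sum -sum1dep_card big_mkcond /=; apply: eq_bigr => t _.
by case: ifP.
Qed.


Lemma intr_sumX (S : nat) (F : nat -> int) :
  ((\sum_(0 <= i < S) F i)%:~R : rat) = \sum_(0 <= i < S) (F i)%:~R.
Proof. by rewrite rmorph_sum. Qed.

Theorem corollary2p2 (k r a b m n : int) :
  1 <= k ->
  0 <= a -> a <= m ->
  0 <= b -> (a%:~R / k%:~R - r%:~R <= (b%:~R : rat)) -> b <= n ->
  (m%:~R / k%:~R - r%:~R <= (n%:~R : rat)) ->
  (#|Lpaths k r a b m n|%:R : rat) =
  \sum_(0 <= i < (absz ((k * (n + r) - m) %/ (k + 1))%Z).+1)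
     (-1) ^+ i
     * ((k * (b + r) - a + 1)%:~R / (k * (n + r - i%:Z) - a + 1)%:~R)
     * (zbinom ((k + 1) * (n - i%:Z) - a - b + k * r) (n - b - i%:Z))%:~R
     * (zbinom (k * (n + r - i%:Z) - m) i%:Z)%:~R.
Proof.
move=> hk ha ham hb hab hbn hmn.
have hk0 : 0 < k by lia.
have hk00 : 0 <= k by lia.
have hab' : a <= k * (b + r).
  by rewrite -(@wa_iff k r a b hk0); exact: hab.
have hmn' : m <= k * (n + r).
  by rewrite -(@wa_iff k r m n hk0); exact: hmn.
set X := k * (n + r) - m.
have hX : 0 <= X by rewrite /X; lia.
pose p := absz (m - a); pose e := absz (n - b).
have hp : p%:Z = m - a by rewrite /p gez0_abs //; lia.
have he : e%:Z = n - b by rewrite /e gez0_abs //; lia.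
have hL : path_len a b m n = (p + e)%N.
  rewrite /path_len; apply/eqP; rewrite -eqz_nat PoszD hp he gez0_abs; lia.
have hcard : #|Lpaths k r a b m n| = cnt k r (m, n) (p + e) (m - p%:Z, n - e%:Z).
  rewrite /Lpaths card_cnt hL.
  have -> : m - p%:Z = a by rewrite hp; ring.
  by have -> : n - e%:Z = b by rewrite he; ring.
set S' := (absz ((k * (n + r) - m) %/ (k + 1))%Z).+1.
have hke : k * e%:Z <= X + p%:Z.
  rewrite he hp /X; have -> : k * (n - b) = k * (n + r) - k * (b + r) by ring.
  lia.
rewrite hcard pmulrn (@main_cnt k r m n X hk erefl hX (p + e) p e erefl hke (maxn e.+1 S')); last first.
  by rewrite leq_max ltnSn.
rewrite (@W_ext _ _ S'); last first.
- move=> i hi; rewrite /T.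
  rewrite zb_small ?mulr0 //.
  have hq0 : 0 <= (X %/ (k + 1))%Z by rewrite divz_ge0 //; lia.
  have hq1 : X < ((X %/ (k + 1))%Z + 1) * (k + 1).
    by rewrite -ltz_divLR //; lia.
  have hiq : (X %/ (k + 1))%Z + 1 <= i%:Z.
    move: hi; rewrite /S' -/X.
    move: (X %/ (k + 1))%Z hq0 => q; case: q => // q _ /=; lia.
  have : ((X %/ (k + 1))%Z + 1) * (k + 1) <= i%:Z * (k + 1).
    by rewrite ler_pM2r //; lia.
  have -> : i%:Z * (k + 1) = k * i%:Z + i%:Z by ring.
  lia.
- by rewrite leq_maxr.
rewrite /W rmorph_sum /=; apply: eq_bigr => i _.
rewrite /T !intrM rmorphXn rmorphN1.
have -> : k * (n + r - i%:Z) - m = X - k * i%:Z by rewrite /X; ring.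
have [hz|hz] := eqVneq (zbinom (X - k * i%:Z) i%:Z) 0.
  by rewrite hz !mulr0.
move: (zb_nz _ _ hz) => /andP[h1 h2].
have hE : 0 <= X - k * i%:Z + p%:Z by lia.
have H := Bf_ratio k (X - k * i%:Z + p%:Z) (e%:Z - i%:Z) hE.
have e1 : k * (b + r) - a + 1 = (X - k * i%:Z + p%:Z) - k * (e%:Z - i%:Z) + 1.
  by rewrite hp he /X; ring.
have e2 : k * (n + r - i%:Z) - a + 1 = (X - k * i%:Z + p%:Z) + 1.
  by rewrite hp /X; ring.
have e3 : (k + 1) * (n - i%:Z) - a - b + k * r = (X - k * i%:Z + p%:Z) + (e%:Z - i%:Z).
  by rewrite hp he /X; ring.
have e4 : n - b - i%:Z = e%:Z - i%:Z by rewrite he.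
rewrite e1 e2 e3 e4.
have hd : ((X - k * i%:Z + p%:Z) + 1)%:~R != 0 :> rat by rewrite intr_eq0; lia.
have HB : ((Bf k (X - k * i%:Z + p%:Z) (e%:Z - i%:Z))%:~R : rat) =
   (((X - k * i%:Z + p%:Z) - k * (e%:Z - i%:Z) + 1)%:~R / ((X - k * i%:Z + p%:Z) + 1)%:~R)
   * (zbinom ((X - k * i%:Z + p%:Z) + (e%:Z - i%:Z)) (e%:Z - i%:Z))%:~R.
  apply: (mulfI hd); rewrite -intrM H intrM mulrA.
  by rewrite [Y in _ = Y * _]mulrC divfK.
by rewrite HB !mulrA.
Qed.
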